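(* Let $W:\mathbb{R}^{3\times2}_+\to[0,\infty)$ be continuously differentiable and satisfy (H4): there is a constant $K>0$ such that $|W_F(\bm F)\bm F^T|\le K(W(\bm F)+1)$ for all $\bm F\in\mathbb{R}^{3\times2}_+$. Let $V\subset\mathbb{R}^3$ be a $2$-dimensional subspace, $\bm 1$ the identity on $V$, and $\bm T\in L(V)$. If $|\bm T-\bm 1|<\delta$ with $\delta>0$ sufficiently small, then there is a constant $C>0$ such that $|W_F(\bm T\bm A)\bm A^T|\le C(W(\bm A)+1)$ for all $\bm A\in L(\mathbb{R}^2,V)\cap\mathbb{R}^{3\times2}_+$.
   Context: $\mathbb{R}^{3\times2}_+:=\{\bm F\in\mathbb{R}^{3\times2}:\det(\bm F^T\bm F)>0\}$ (an open subset of $\mathbb{R}^{3\times2}$); $W_F$ denotes the derivative of $W$ with respect to $\bm F$, a $3\times2$ matrix; $|\cdot|$ is the Frobenius norm (so $|\bm 1|=\sqrt2$). Elements of $L(\mathbb{R}^2,V)$ are identified with $3\times2$ matrices whose columns lie in $V$. *)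

(* Defs.v *)
From HB Require Import structures.
From mathcomp Require Import all_boot all_order all_algebra.
From mathcomp Require Import all_classical all_reals all_analysis.
Set Implicit Arguments. Unset Strict Implicit. Unset Printing Implicit Defensive.
Import Order.TTheory GRing.Theory Num.Theory.
Import numFieldNormedType.Exports.
Local Open Scope ring_scope.

Definition frob (R : realType) (m n : nat) (A : 'M[R]_(m, n)) : R :=
  Num.sqrt (\sum_(i < m) \sum_(j < n) A i j ^+ 2).

Definition Mplus (R : realType) (F : 'M[R]_(3, 2)) : Prop :=
  0 < \det (F^T *m F).

Definition WF (R : realType) (W : 'M[R]_(3, 2) -> R) (F : 'M[R]_(3, 2))
  : 'M[R]_(3, 2) :=
  \matrix_(i < 3, j < 2) ('d W F (delta_mx i j)).

(* Main.v *)
Require Import Defs.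
From HB Require Import structures.
From mathcomp Require Import all_boot all_order all_algebra.
From mathcomp Require Import all_classical all_reals all_analysis.
From mathcomp Require Import ring lra.
Set Implicit Arguments. Unset Strict Implicit. Unset Printing Implicit Defensive.
Import Order.TTheory GRing.Theory Num.Theory.
Import numFieldNormedType.Exports.
Local Open Scope ring_scope.

Lemma CS (R : realFieldType) (I : finType) (a b : I -> R) :
  (\sum_i a i * b i)^+2 <= (\sum_i a i ^+2) * (\sum_i b i ^+2).
Proof.
set A := \sum_i a i ^+2; set B := \sum_i b i ^+2; set C := \sum_i a i * b i.
have E : \sum_i (B * a i - C * b i)^+2 = B * (A * B - C^+2).
  transitivity (\sum_i (B^+2 * a i ^+2 - (2*B*C) * (a i * b i) + C^+2 * b i ^+2)).
    by apply: eq_bigr => i _; ring.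
  rewrite big_split /= big_split /= sumrN -!mulr_sumr -/A -/B -/C; ring.
have B0 : 0 <= B by apply: sumr_ge0 => i _; exact: sqr_ge0.
have [Bz|Bp] := eqVneq B 0.
  have bz : forall i, b i = 0.
    move=> i; apply/eqP; rewrite -sqrf_eq0; apply/eqP.
    by move: Bz => /eqP; rewrite psumr_eq0 => [/allP H|j _]; [exact/eqP/H/mem_index_enum|exact: sqr_ge0].
  have -> : C = 0 by rewrite /C big1 // => i _; rewrite bz mulr0.
  by rewrite Bz expr0n /= mulr0.
have Bpos : 0 < B by rewrite lt_def Bp B0.
have : 0 <= B * (A * B - C^+2) by rewrite -E; apply: sumr_ge0 => i _; exact: sqr_ge0.
by rewrite pmulr_rge0 // subr_ge0.
Qed.

Section Frob.
Variable R : realType.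

Definition ip m n (X Y : 'M[R]_(m,n)) := \sum_i \sum_j X i j * Y i j.
Definition sq m n (X : 'M[R]_(m,n)) := \sum_i \sum_j X i j ^+ 2.

Lemma sq_ge0 m n (X : 'M[R]_(m,n)) : 0 <= sq X.
Proof. by apply: sumr_ge0 => i _; apply: sumr_ge0 => j _; exact: sqr_ge0. Qed.

Lemma frob_ge0 m n (X : 'M[R]_(m,n)) : 0 <= frob X.
Proof. exact: sqrtr_ge0. Qed.

Lemma frob_sqr m n (X : 'M[R]_(m,n)) : frob X ^+ 2 = sq X.
Proof. by rewrite /frob sqr_sqrtr // sq_ge0. Qed.

Lemma le_from_sq (a b : R) : 0 <= b -> a ^+ 2 <= b ^+ 2 -> a <= b.
Proof.
move=> b0 h; apply: (le_trans (ler_norm a)).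
by rewrite -sqrtr_sqr -[b]ger0_norm // -sqrtr_sqr ler_sqrt // sqr_ge0.
Qed.

Lemma ip_CS m n (X Y : 'M[R]_(m,n)) : ip X Y <= frob X * frob Y.
Proof.
apply: (le_trans (ler_norm _)).
rewrite -sqrtr_sqr /frob -sqrtrM ?sq_ge0 // ler_sqrt ?mulr_ge0 ?sq_ge0 //.
rewrite /ip /sq !pair_bigA /=.
exact: (CS (fun p : 'I_m * 'I_n => X p.1 p.2) (fun p => Y p.1 p.2)).
Qed.

Lemma frob_add m n (X Y : 'M[R]_(m,n)) : frob (X + Y) <= frob X + frob Y.
Proof.
apply: le_from_sq; first by rewrite addr_ge0 ?frob_ge0.
have H : sq (X + Y) = sq X + 2 * ip X Y + sq Y.
  rewrite /sq /ip mulr_sumr -!big_split /=; apply: eq_bigr => i _.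
  rewrite mulr_sumr -!big_split /=; apply: eq_bigr => j _; rewrite mxE; ring.
rewrite frob_sqr H sqrrD -!frob_sqr lerD2r lerD2l.
have := ip_CS X Y; lra. Qed.

Lemma frob_scale m n a (X : 'M[R]_(m,n)) : frob (a *: X) = `|a| * frob X.
Proof.
rewrite /frob -sqrtr_sqr -sqrtrM ?sqr_ge0 //; congr Num.sqrt.
rewrite mulr_sumr; apply: eq_bigr => i _; rewrite mulr_sumr; apply: eq_bigr => j _.
by rewrite mxE exprMn.
Qed.

Lemma frob_opp m n (X : 'M[R]_(m,n)) : frob (- X) = frob X.
Proof. by rewrite -scaleN1r frob_scale normrN normr1 mul1r. Qed.

Lemma frob_tr m n (X : 'M[R]_(m,n)) : frob X^T = frob X.
Proof.
rewrite /frob exchange_big; congr Num.sqrt; apply: eq_bigr => i _; apply: eq_bigr => j _.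
by rewrite mxE.
Qed.

Lemma frob_mul m n p (X : 'M[R]_(m,n)) (Y : 'M[R]_(n,p)) :
  frob (X *m Y) <= frob X * frob Y.
Proof.
apply: le_from_sq; first by rewrite mulr_ge0 ?frob_ge0.
rewrite exprMn !frob_sqr /sq [X in _ <= _ * X]exchange_big /= mulr_suml.
apply: ler_sum => i _; rewrite mulr_sumr; apply: ler_sum => k _.
rewrite mxE; exact: CS.
Qed.

Lemma frob_eq0 m n (X : 'M[R]_(m,n)) : frob X = 0 -> X = 0.
Proof.
move=> /eqP; rewrite sqrtr_eq0 => h.
have h0 : sq X = 0 by apply/eqP; rewrite eq_le h sq_ge0.
apply/matrixP => i j; rewrite mxE.
have H1 : \sum_j X i j ^+2 = 0.
  by apply: (psumr_eq0P _ h0) => // k _; apply: sumr_ge0 => l _; exact: sqr_ge0.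
have H2 : X i j ^+ 2 = 0.
  by apply: (psumr_eq0P _ H1) => // k _; exact: sqr_ge0.
by move/eqP: H2; rewrite sqrf_eq0 => /eqP.
Qed.

End Frob.

Lemma det22 (R : comNzRingType) (M : 'M[R]_2) : \det M = M 0 0 * M 1 1 - M 0 1 * M 1 0.
Proof.
rewrite (expand_det_row _ ord0) !big_ord_recl big_ord0 /cofactor.
rewrite !det_mx11 /= !mxE /= addr0 expr0 expr1 mul1r mulN1r mulrN.
congr (_ * M _ _ - _ * M _ _). all: by [apply: val_inj | congr (M _ _); apply: val_inj].
Qed.

Section Gr.
Variable R : realType.

Lemma kder (c t : R) : derivable (fun s : R => expR (s * c)) t 1 /\
  derive1 (fun s : R => expR (s * c)) t = expR (t * c) * c.
Proof.
have dl : derivable (fun s : R => s * c) t 1.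
  by apply: derivableM.
have de : derivable (@expR R) (t * c) 1 by exact: derivable_expR.
split.
  apply/derivable1_diffP; apply: (@differentiable_comp _ _ _ _ (fun s : R => s * c) (@expR R)).
    exact/derivable1_diffP.
  exact/derivable1_diffP.
have := derive1_comp dl de; rewrite /comp => ->.
rewrite derive1E (@derive_val _ _ _ _ _ _ _ (is_derive_expR (t*c))); congr (_ * _).
rewrite derive1E (_ : (fun s : R => s * c) = id * cst c) //.
rewrite (deriveM (f:=id) (g:=cst c)); [|exact: derivable_id|exact: derivable_cst].
by rewrite derive_cst derive_id scaler0 add0r [c *: _]mulr1.
Qed.

Lemma gronwall (g : R -> R) (c : R) :
  (forall t, 0 <= t <= 1 -> derivable g t 1) ->
  (forall t, 0 <= t <= 1 -> derive1 g t <= c * (g t + 1)) ->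
  g 1 + 1 <= expR c * (g 0 + 1).
Proof.
move=> dg dgle.
pose G := g + cst 1.
pose Kf := fun s : R => expR (s * - c).
pose h := G * Kf.
have dG t : 0 <= t <= 1 -> derivable G t 1.
  by move=> ht; apply: derivableD; [exact: dg | exact: derivable_cst].
have dh t : 0 <= t <= 1 -> derivable h t 1 /\ derive1 h t <= 0.
  move=> ht; have [dk k'] := kder (- c) t.
  split; first by apply: derivableM; [exact: dG | exact: dk].
  rewrite derive1E (deriveM (dG t ht) dk).
  rewrite -derive1E k' deriveD; [|exact: dg|exact: derivable_cst].
  rewrite derive_cst addr0 -derive1E.
  have := dgle t ht; rewrite /G /Kf /=.
  have := expR_gt0 (t * - c).
  set e := expR _; set d := derive1 g t; move=> e0 hd.
  rewrite /GRing.scale /=.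
  have : 0 <= e * (c * (g t + 1) - d) by apply: mulr_ge0; [exact: ltW | rewrite subr_ge0].
  rewrite (_ : (g + cst 1) t = g t + 1) //; lra.
have hle : h 1 <= h 0.
  apply: (@ler0_derive1_le_cc R h 0 1).
  - by move=> x; rewrite in_itv /= => /andP[x0 x1]; apply: (dh x _).1; rewrite !ltW.
  - by move=> x; rewrite in_itv /= => /andP[x0 x1]; apply: (dh x _).2; rewrite !ltW.
  - apply: derivable_within_continuous => x; rewrite in_itv /= => hx; exact: (dh x hx).1.
  - by rewrite in_itv /= lexx ler01.
  - by rewrite in_itv /= lexx ler01.
  - exact: ler01.
have hE : forall x, h x = (g x + 1) * expR (x * - c) by [].
move: hle; rewrite !hE mul1r mul0r expR0 mulr1 => hle.
have := expRxMexpNx_1 c.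
have := expR_gt0 c.
set a := expR c; set b := expR (- c); move=> a0 ab.
have h2 : (g 1 + 1) * b * a <= (g 0 + 1) * a by rewrite ler_pM2r.
by rewrite -mulrA (mulrC b) ab mulr1 mulrC in h2.
Qed.
End Gr.


Section Main.
Variable R : realType.

Lemma scale_mulr1 (h : R) : h *: (1 : R) = h.
Proof. by rewrite [h *: _]mulr1. Qed.

Lemma unitM (E : 'M[R]_3) (t : R) : frob E < 2^-1 -> `|t| <= 1 ->
  (1%:M + t *: E) \in unitmx.
Proof.
move=> hE ht; rewrite unitmxE unitfE; apply/negP => /det0P [v nz vM].
have hv : v = - (t *: (v *m E)).
  by move: vM; rewrite mulmxDr mulmx1 scalemxAr => /eqP; rewrite addr_eq0 => /eqP.
have h1 : frob v <= frob v * 2^-1.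
  rewrite {1}hv frob_opp frob_scale.
  apply: le_trans (ler_pM (normr_ge0 t) (frob_ge0 _) ht (frob_mul v E)) _.
  by rewrite mul1r; apply: ler_wpM2l; [exact: frob_ge0 | exact: ltW].
have : frob v = 0 by have := frob_ge0 v; lra.
by move/frob_eq0 => v0; rewrite v0 eqxx in nz.
Qed.

Lemma invbound (E : 'M[R]_3) (t : R) : frob E < 2^-1 -> `|t| <= 1 ->
  frob (invmx (1%:M + t *: E)) <= 2 * frob (1%:M : 'M[R]_3).
Proof.
move=> hE ht; set S := invmx _.
have hS : (1%:M + t *: E) *m S = 1%:M by rewrite mulmxV // unitM.
have hS' : S = 1%:M - t *: (E *m S).
  by rewrite -hS mulmxDl mul1mx -scalemxAl addrK.
have h1 : frob S <= frob (1%:M : 'M[R]_3) + frob S * 2^-1.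
  rewrite {1}hS'; apply: le_trans (frob_add _ _) _; rewrite frob_opp frob_scale lerD2l.
  apply: le_trans (ler_pM (normr_ge0 t) (frob_ge0 _) ht (frob_mul E S)) _.
  by rewrite mul1r mulrC; apply: ler_wpM2l; [exact: frob_ge0 | exact: ltW].
lra.
Qed.

Lemma gram m n (F : 'M[R]_(m,n)) i j : (F^T *m F) i j = \sum_k F k i * F k j.
Proof. by rewrite mxE; apply: eq_bigr => k _; rewrite mxE. Qed.

Lemma Mplus_mul (M : 'M[R]_3) (A : 'M[R]_(3,2)) :
  Mplus A -> M \in unitmx -> Mplus (M *m A).
Proof.
move=> hA hM; rewrite /Mplus; set F := M *m A.
have ge : 0 <= \det (F^T *m F).
  rewrite det22 !gram subr_ge0.
  have -> : \sum_k F k 1 * F k 0 = \sum_k F k 0 * F k 1.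
    by apply: eq_bigr => k _; rewrite mulrC.
  rewrite -expr2.
  have -> : \sum_k F k 0 * F k 0 = \sum_k F k 0 ^+ 2 by apply: eq_bigr => k _; rewrite expr2.
  have -> : \sum_k F k 1 * F k 1 = \sum_k F k 1 ^+ 2 by apply: eq_bigr => k _; rewrite expr2.
  exact: CS.
have ne : \det (F^T *m F) != 0.
  apply/negP => /det0P [v nz vG].
  set w := F *m v^T.
  have ww : w^T *m w = 0.
    by rewrite /w trmx_mul trmxK mulmxA -(mulmxA v) vG mul0mx.
  have w0 : w = 0.
    apply: frob_eq0; rewrite /frob -/(sq w).
    have -> : sq w = (w^T *m w) 0 0.
      rewrite /sq gram; apply: eq_bigr => k _; rewrite big_ord1 expr2.
      by congr (w k _ * w k _); apply: val_inj.
    by rewrite ww mxE sqrtr0.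
  have Av : A *m v^T = 0.
    have MAv : M *m (A *m v^T) = 0 by rewrite mulmxA -/F -/w w0.
    by rewrite -[A]mul1mx -(mulVmx hM) -!mulmxA MAv mulmx0.
  have : v *m (A^T *m A) = 0.
    by rewrite mulmxA -[v]trmxK -trmx_mul Av trmx0 mul0mx.
  move=> vA; move: hA; rewrite /Mplus.
  have /eqP -> : \det (A^T *m A) == 0 by apply/det0P; exists v.
  by rewrite ltxx.
by rewrite lt_def ne ge.
Qed.

Lemma dW_expand (W : 'M[R]_(3,2) -> R) F B :
  'd W F B = ip B (WF W F).
Proof.
rewrite {1}[B]matrix_sum_delta linear_sum /ip; apply: eq_bigr => i _.
rewrite linear_sum; apply: eq_bigr => j _; rewrite linearZ mxE.
by [].
Qed.

Lemma ip_mulr m n p (X : 'M[R]_(m,n)) (F : 'M[R]_(n,p)) (Y : 'M[R]_(m,p)) :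
  ip (X *m F) Y = ip X (Y *m F^T).
Proof.
rewrite /ip; apply: eq_bigr => i _.
under eq_bigr do rewrite mxE big_distrl /=.
rewrite exchange_big; apply: eq_bigr => k _; rewrite mxE mulr_sumr.
by apply: eq_bigr => j _; rewrite !mxE; ring.
Qed.

Lemma line_derive (W : 'M[R]_(3,2) -> R) (A B : 'M[R]_(3,2)) (t : R) :
  differentiable W (t *: B + A) ->
  derivable (fun s : R => W (s *: B + A)) t 1 /\
  derive1 (fun s : R => W (s *: B + A)) t = 'd W (t *: B + A) B.
Proof.
move=> dW.
have Fe : (fun h : R => h^-1 *: (((fun s : R => W (s *: B + A)) \o shift t) (h *: 1)
      - (fun s : R => W (s *: B + A)) t))
  = (fun h : R => h^-1 *: ((W \o shift (t *: B + A)) (h *: B) - W (t *: B + A))).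
  apply/funext => h /=; rewrite /shift scale_mulr1 scalerDl -addrA.
  by [].
split.
  rewrite /derivable Fe; exact: diff_derivable.
rewrite derive1E /derive Fe -/(derive W (t *: B + A) B); exact: deriveE.
Qed.

End Main.

Unset Implicit Arguments.
Theorem lemma10 (R : realType) (W : 'M[R]_(3, 2) -> R) (K : R) :
  (* W : R^{3x2}_+ -> [0, oo) *)
  (forall F, Mplus F -> 0 <= W F) ->
  (* W is continuously differentiable on the open set R^{3x2}_+ *)
  (forall F, Mplus F -> differentiable W F) ->
  (forall F, Mplus F -> {for F, continuous (WF W)}) ->
  (* (H4) *)
  0 < K ->
  (forall F, Mplus F -> frob (WF W F *m F^T) <= K * (W F + 1)) ->
  (* V = range of the orthogonal projection P, dim V = 2; the identity 1 on V
     is represented by P, and T in L(V) by the 3x3 matrix T = P T P *)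
  forall P : 'M[R]_3, P^T = P -> P *m P = P -> \rank P = 2%N ->
  exists delta : R, 0 < delta /\
    forall T : 'M[R]_3, P *m T *m P = T -> frob (T - P) < delta ->
    exists C : R, 0 < C /\
      forall A : 'M[R]_(3, 2), P *m A = A -> Mplus A ->
        frob (WF W (T *m A) *m A^T) <= C * (W A + 1).
Proof.
move=> W0 Wd WFc K0 H4 P Psym Pid Prank.
exists (2^-1); split; first by rewrite invr_gt0 ltr0n.
move=> T _ hT.
set L := frob (1%:M : 'M[R]_3).
have L0 : 0 <= L := frob_ge0 _.
have eK : 0 <= expR (L * K) := expR_ge0 _.
have K0' : 0 <= K := ltW K0.
exists (2 * L * K * expR (L * K) + 1); split.
  have : 0 <= 2 * L * K * expR (L * K) by rewrite !mulr_ge0.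
  lra.
move=> A hPA hA.
set E := T - P.
set B := E *m A.
have hE : frob E < 2^-1 := hT.
have nt (t : R) : 0 <= t <= 1 -> `|t| <= 1 by move=> /andP[t0 t1]; rewrite ger0_norm.
have key t : (1%:M + t *: E) *m A = t *: B + A.
  by rewrite mulmxDl mul1mx -scalemxAl addrC.
have MP (t : R) : 0 <= t <= 1 -> Mplus (t *: B + A).
  by move=> ht; rewrite -key; apply: Mplus_mul hA (unitM hE (nt t ht)).
have SF (t : R) : 0 <= t <= 1 -> invmx (1%:M + t *: E) *m (t *: B + A) = A.
  by move=> ht; rewrite -key mulmxA mulVmx ?mul1mx // unitM // nt.
pose g := fun s : R => W (s *: B + A).
have gr : g 1 + 1 <= expR (L * K) * (g 0 + 1).
  apply: gronwall.
    by move=> t ht; exact: (line_derive (Wd _ (MP t ht))).1.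
  move=> t ht; rewrite /g (line_derive (Wd _ (MP t ht))).2 dW_expand.
  set F := t *: B + A; set S := invmx (1%:M + t *: E).
  have BE : B = (E *m S) *m F by rewrite -mulmxA SF.
  have -> : ip B (WF W F) = ip (E *m S) (WF W F *m F^T) by rewrite -ip_mulr -BE.
  apply: le_trans (ip_CS _ _) _.
  have hES : frob (E *m S) <= L.
    apply: le_trans (frob_mul _ _) _.
    apply: le_trans (ler_pM (frob_ge0 _) (frob_ge0 _) (ltW hE) (invbound hE (nt t ht))) _.
    by rewrite mulrA mulVf ?mul1r // pnatr_eq0.
  rewrite -mulrA.
  exact: ler_pM (frob_ge0 _) (frob_ge0 _) hES (H4 _ (MP t ht)).
have h01 : 0 <= (1:R) <= 1.
  by apply/andP; split; [exact: ler01 | exact: lexx].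
have hTA : T *m A = 1 *: B + A by rewrite scale1r /B /E mulmxBl hPA subrK.
rewrite hTA.
have hAT : A^T = (1 *: B + A)^T *m (invmx (1%:M + 1 *: E))^T.
  by rewrite -trmx_mul SF.
rewrite hAT mulmxA.
have s1 : frob (WF W (1 *: B + A) *m (1 *: B + A)^T *m (invmx (1%:M + 1 *: E))^T)
   <= K * (W (1 *: B + A) + 1) * (2 * L).
  apply: le_trans (frob_mul _ _) _.
  apply: ler_pM (frob_ge0 _) (frob_ge0 _) (H4 _ (MP 1 h01)) _.
  by rewrite frob_tr; apply: invbound => //; rewrite normr1.
apply: le_trans s1 _.
have hg : W (1 *: B + A) + 1 <= expR (L * K) * (W A + 1).
  by move: gr; rewrite /g scale0r add0r.
have s2 : K * (W (1 *: B + A) + 1) * (2 * L) <= K * (expR (L * K) * (W A + 1)) * (2 * L).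
  by apply: ler_wpM2r; [rewrite mulr_ge0 | apply: ler_wpM2l].
apply: le_trans s2 _.
have WA0 := W0 A hA.
set e := expR (L * K).
have -> : K * (e * (W A + 1)) * (2 * L) = 2 * L * K * e * (W A + 1) by ring.
lra.
Qed.
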